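(* Let $G$ be a closed, connected, self adjoint, noncompact subgroup of $GL(n,\mathbb{R})$ and let $v\in\mathbb{R}^n$ be a nonzero minimal vector such that $G(v)$ is unbounded. Then $0<\lambda_X(v)\le 1$ for every $X\in\widetilde{\mathfrak{P}_v}$ with $|X|=1$.
   Context: $\langle A,B\rangle=\mathrm{trace}(AB^t)$, $|A|^2=\langle A,A\rangle$. $v$ is minimal if $|g(v)|\ge|v|$ for all $g\in G$. $\mathfrak{G}$ is the Lie algebra of $G$, $\mathfrak{K}$ and $\mathfrak{P}$ its skew-symmetric and symmetric elements, $\mathfrak{G}_v=\{X\in\mathfrak{G}:X(v)=0\}$, $\widetilde{\mathfrak{P}_v}=(\mathfrak{K}+\mathfrak{G}_v)^\perp\subset\mathfrak{P}$. For nonzero $X\in\mathfrak{P}$, $\lambda_X(v)$ is the largest eigenvalue of $X$ such that $v$ has a nonzero component in the corresponding eigenspace. *)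

(* Defs.v *)
From Stdlib Require Import Reals List.
From mathcomp Require Import all_boot.

Set Implicit Arguments.
Unset Strict Implicit.

Local Open Scope R_scope.

Definition mat (n : nat) := 'I_n -> 'I_n -> R.
Definition vec (n : nat) := 'I_n -> R.

Definition rsum (n : nat) (f : 'I_n -> R) : R := \big[Rplus/R0]_(i < n) f i.

Definition mid (n : nat) : mat n := fun i j => if i == j then 1 else 0.
Arguments mid n : clear implicits.
Definition mmul (n : nat) (A B : mat n) : mat n :=
  fun i j => rsum (fun k => A i k * B k j).
Definition madd (n : nat) (A B : mat n) : mat n := fun i j => A i j + B i j.
Definition mopp (n : nat) (A : mat n) : mat n := fun i j => - A i j.
Definition mscale (n : nat) (t : R) (A : mat n) : mat n := fun i j => t * A i j.
Definition mtr (n : nat) (A : mat n) : mat n := fun i j => A j i.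
Definition mtrace (n : nat) (A : mat n) : R := rsum (fun i => A i i).

Definition mdot (n : nat) (A B : mat n) : R := mtrace (mmul A (mtr B)).
Definition mnorm (n : nat) (A : mat n) : R := sqrt (mdot A A).

Definition vzero (n : nat) : vec n := fun _ => 0.
Arguments vzero n : clear implicits.
Definition vscale (n : nat) (t : R) (v : vec n) : vec n := fun i => t * v i.
Definition mapply (n : nat) (A : mat n) (v : vec n) : vec n :=
  fun i => rsum (fun k => A i k * v k).
Definition vdot (n : nat) (v w : vec n) : R := rsum (fun i => v i * w i).
Definition vnorm (n : nat) (v : vec n) : R := sqrt (vdot v v).

Fixpoint mpow (n : nat) (A : mat n) (k : nat) : mat n :=
  match k with O => mid n | S k' => mmul A (mpow A k') end.

Definition is_mexp (n : nat) (X E : mat n) : Prop :=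
  forall i j, Un_cv (fun N => sum_f_R0 (fun k => mpow X k i j / INR (Factorial.fact k)) N)
                    (E i j).

Definition invertible (n : nat) (A : mat n) : Prop :=
  exists B, mmul A B = mid n /\ mmul B A = mid n.

Definition subgroup_GL (n : nat) (G : mat n -> Prop) : Prop :=
  (forall g, G g -> invertible g) /\
  G (mid n) /\
  (forall g h, G g -> G h -> G (mmul g h)) /\
  (forall g, G g -> exists h, G h /\ mmul g h = mid n /\ mmul h g = mid n).

Definition closed_in_GL (n : nat) (G : mat n -> Prop) : Prop :=
  forall (s : nat -> mat n) (A : mat n),
    (forall k, G (s k)) ->
    (forall i j, Un_cv (fun k => s k i j) (A i j)) ->
    invertible A -> G A.

Definition mopen (n : nat) (U : mat n -> Prop) : Prop :=
  forall A, U A -> exists eps, 0 < eps /\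
    forall B, mnorm (madd B (mopp A)) < eps -> U B.

Definition mconnected (n : nat) (S : mat n -> Prop) : Prop :=
  ~ exists U V : mat n -> Prop,
      mopen U /\ mopen V /\
      (forall A, S A -> U A \/ V A) /\
      (exists A, S A /\ U A) /\ (exists A, S A /\ V A) /\
      (forall A, S A -> U A -> V A -> False).

Definition mcompact (n : nat) (S : mat n -> Prop) : Prop :=
  forall (I : Type) (U : I -> mat n -> Prop),
    (forall i, mopen (U i)) ->
    (forall A, S A -> exists i, U i A) ->
    exists l : list I, forall A, S A -> exists i, In i l /\ U i A.

Definition self_adjoint (n : nat) (G : mat n -> Prop) : Prop :=
  forall g, G g -> G (mtr g).

Definition lie_alg (n : nat) (G : mat n -> Prop) (X : mat n) : Prop :=
  forall t : R, exists E, is_mexp (mscale t X) E /\ G E.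

Definition frakK (n : nat) (G : mat n -> Prop) (X : mat n) : Prop :=
  lie_alg G X /\ mtr X = mopp X.
Definition frakP (n : nat) (G : mat n -> Prop) (X : mat n) : Prop :=
  lie_alg G X /\ mtr X = X.
Definition stab_alg (n : nat) (G : mat n -> Prop) (v : vec n) (X : mat n) : Prop :=
  lie_alg G X /\ mapply X v = vzero n.
Definition Ptilde (n : nat) (G : mat n -> Prop) (v : vec n) (X : mat n) : Prop :=
  frakP G X /\
  forall K Z, frakK G K -> stab_alg G v Z -> mdot X (madd K Z) = 0.

Definition minimal (n : nat) (G : mat n -> Prop) (v : vec n) : Prop :=
  forall g, G g -> vnorm v <= vnorm (mapply g v).

Definition orbit_unbounded (n : nat) (G : mat n -> Prop) (v : vec n) : Prop :=
  ~ exists M : R, forall g, G g -> vnorm (mapply g v) <= M.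

(* l is an eigenvalue of X such that v has a nonzero component in the
   l-eigenspace (i.e. v is not orthogonal to that eigenspace) *)
Definition eigen_comp (n : nat) (X : mat n) (v : vec n) (l : R) : Prop :=
  exists w : vec n, mapply X w = vscale l w /\ vdot v w <> 0.

Definition is_lambda (n : nat) (X : mat n) (v : vec n) (l : R) : Prop :=
  eigen_comp X v l /\ forall m, eigen_comp X v m -> m <= l.

(* Main.v *)
Require Import Defs.
From HB Require Import structures.
From Stdlib Require Import Reals Lra ClassicalEpsilon FunctionalExtensionality PropExtensionality List.
From mathcomp Require Import all_boot all_algebra.
Set Implicit Arguments. Unset Strict Implicit. Unset Printing Implicit Defensive.
Import GRing.Theory.

Local Open Scope ring_scope.

Definition Req_bool (x y : R) : bool := if Req_EM_T x y then true else false.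
Lemma Req_boolP : Equality.axiom Req_bool.
Proof. move=> x y; rewrite /Req_bool; case: Req_EM_T => H; constructor => //. Qed.
HB.instance Definition _ := hasDecEq.Build R Req_boolP.

Definition Rfind (P : pred R) (n : nat) : option R :=
  match excluded_middle_informative (exists x, P x) with
  | left H => Some (proj1_sig (constructive_indefinite_description _ H))
  | right _ => None end.
Lemma Rfind1 P n x : Rfind P n = Some x -> P x.
Proof. rewrite /Rfind; case: excluded_middle_informative => // H [<-].
  exact: (proj2_sig (constructive_indefinite_description _ H)). Qed.
Lemma Rfind2 (P : pred R) : (exists x, P x) -> exists n, Rfind P n.
Proof. move=> H; exists 0%N; rewrite /Rfind; case: excluded_middle_informative => //. Qed.
Lemma Rfind3 (P Q : pred R) : P =1 Q -> Rfind P =1 Rfind Q.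
Proof. move=> H; have -> : P = Q by apply: functional_extensionality. by []. Qed.
HB.instance Definition _ := hasChoice.Build R Rfind1 Rfind2 Rfind3.

Lemma R_addNr : left_inverse R0 Ropp Rplus. Proof. move=> x; lra. Qed.
Lemma R_add0r : left_id R0 Rplus. Proof. move=> x; lra. Qed.
Lemma R_addA : associative Rplus. Proof. move=> x y z; lra. Qed.
Lemma R_addC : commutative Rplus. Proof. move=> x y; lra. Qed.
HB.instance Definition _ := GRing.isZmodule.Build R R_addA R_addC R_add0r R_addNr.
Lemma R_mulA : associative Rmult. Proof. move=> x y z; ring. Qed.
Lemma R_mulC : commutative Rmult. Proof. move=> x y; ring. Qed.
Lemma R_mul1 : left_id R1 Rmult. Proof. move=> x; ring. Qed.
Lemma R_mulD : left_distributive Rmult Rplus. Proof. move=> x y z; ring. Qed.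
Lemma R_10 : R1 != R0. Proof. apply/eqP; lra. Qed.
HB.instance Definition _ := GRing.Zmodule_isComNzRing.Build R R_mulA R_mulC R_mul1 R_mulD R_10.
Lemma R_mulV : forall x : R, (x != 0 -> Rinv x * x = 1)%R.
Proof. move=> x /eqP H; apply: Rinv_l; exact H. Qed.
Lemma R_inv0 : Rinv R0 = R0. Proof. exact: Rinv_0. Qed.
HB.instance Definition _ := GRing.ComNzRing_isField.Build R R_mulV R_inv0.

Lemma RaddE (x y : R) : x + y = Rplus x y. Proof. by []. Qed.
Lemma RmulE (x y : R) : x * y = Rmult x y. Proof. by []. Qed.
Lemma RoppE (x : R) : - x = Ropp x. Proof. by []. Qed.
Lemma R0E : 0 = IZR Z0 :> R. Proof. by []. Qed.
Lemma R1E : 1 = IZR (Zpos xH) :> R. Proof. by []. Qed.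
Lemma RinvE (x : R) : x^-1 = Rinv x.
Proof. case: (boolP (x == 0)) => [/eqP ->|H].
  by rewrite invr0 R_inv0. by apply: (mulIf H); rewrite mulVf // R_mulV. Qed.
Ltac toR := rewrite ?RaddE ?RmulE ?RoppE ?R0E ?R1E ?RinvE.

Local Open Scope ring_scope.

Local Open Scope ring_scope.

Lemma sum_le (I : Type) (r : seq I) (P : pred I) (F G : I -> R) :
  (forall i, P i -> Rle (F i) (G i)) ->
  Rle (\sum_(i <- r | P i) F i) (\sum_(i <- r | P i) G i).
Proof. move=> H; apply: (big_ind2 (fun x y => Rle x y)) => //.
  by apply: Rle_refl. by move=> ? ? ? ? ? ?; toR; lra. Qed.

Lemma sum_ge0 (I : Type) (r : seq I) (P : pred I) (F : I -> R) :
  (forall i, P i -> Rle 0 (F i)) -> Rle 0 (\sum_(i <- r | P i) F i).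
Proof. move=> H; apply: (big_ind (fun x => Rle 0 x)) => //.
  by apply: Rle_refl. by move=> ? ? ? ?; toR; lra. Qed.

Lemma sum_abs (I : Type) (r : seq I) (P : pred I) (F : I -> R) :
  Rle (Rabs (\sum_(i <- r | P i) F i)) (\sum_(i <- r | P i) Rabs (F i)).
Proof. apply: (big_ind2 (fun x y => Rle (Rabs x) y)) => //.
  by rewrite R0E Rabs_R0; apply: Rle_refl.
  move=> x1 x2 y1 y2 ? ?; toR; have := Rabs_triang x1 y1; lra.
  by move=> i _; apply: Rle_refl. Qed.

Lemma term_le_sum (I : finType) (F : I -> R) i :
  (forall j, Rle 0 (F j)) -> Rle (F i) (\sum_j F j).
Proof. move=> H; rewrite (bigD1 i) //=; toR.
  rewrite -[X in Rle X _]Rplus_0_r; apply: Rplus_le_compat_l.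
  exact: (@sum_ge0 I (index_enum I) (fun j => j != i) F (fun j _ => H j)). Qed.

Definition dot n (u w : 'rV[R]_n) : R := (u *m w^T) 0 0.

Lemma dotE n (u w : 'rV[R]_n) : dot u w = \sum_i u 0 i * w 0 i.
Proof. by rewrite /dot !mxE; apply: eq_bigr => i _; rewrite !mxE. Qed.

Lemma dotC n (u w : 'rV[R]_n) : dot u w = dot w u.
Proof. rewrite !dotE; apply: eq_bigr => i _; exact: mulrC. Qed.

Lemma dotDl n (u u' w : 'rV[R]_n) : dot (u + u') w = dot u w + dot u' w.
Proof. by rewrite /dot mulmxDl mxE. Qed.
Lemma dotZl n a (u w : 'rV[R]_n) : dot (a *: u) w = a * dot u w.
Proof. by rewrite /dot -scalemxAl mxE. Qed.
Lemma dotNl n (u w : 'rV[R]_n) : dot (- u) w = - dot u w.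
Proof. by rewrite /dot mulNmx mxE. Qed.
Lemma dotBl n (u u' w : 'rV[R]_n) : dot (u - u') w = dot u w - dot u' w.
Proof. by rewrite dotDl dotNl. Qed.
Lemma dotDr n (u u' w : 'rV[R]_n) : dot w (u + u') = dot w u + dot w u'.
Proof. by rewrite dotC dotDl -!(dotC w). Qed.
Lemma dotZr n a (u w : 'rV[R]_n) : dot w (a *: u) = a * dot w u.
Proof. by rewrite dotC dotZl dotC. Qed.
Lemma dotBr n (u u' w : 'rV[R]_n) : dot w (u - u') = dot w u - dot w u'.
Proof. by rewrite dotC dotBl -!(dotC w). Qed.
Lemma dot0l n (w : 'rV[R]_n) : dot 0 w = 0.
Proof. by rewrite /dot mul0mx mxE. Qed.
Lemma dot0r n (w : 'rV[R]_n) : dot w 0 = 0.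
Proof. by rewrite dotC dot0l. Qed.
Lemma dot_suml n (I : Type) (r : seq I) (P : pred I) (F : I -> 'rV[R]_n) w :
  dot (\sum_(i <- r | P i) F i) w = \sum_(i <- r | P i) dot (F i) w.
Proof. apply: (big_morph (fun u => dot u w)). by move=> ? ?; exact: dotDl. exact: dot0l. Qed.

Lemma dotX n (X : 'M[R]_n) (u w : 'rV[R]_n) : X^T = X ->
  dot u (w *m X) = dot (u *m X) w.
Proof. by move=> sX; rewrite /dot trmx_mul sX mulmxA. Qed.

Lemma dot_ge0 n (u : 'rV[R]_n) : Rle 0 (dot u u).
Proof. rewrite dotE; apply: sum_ge0 => i _; toR; nra. Qed.

Lemma coord_le n (u : 'rV[R]_n) i : Rle (u 0 i * u 0 i) (dot u u).
Proof. rewrite dotE; apply: (@term_le_sum _ (fun j => u 0 j * u 0 j) i) => j; toR; nra. Qed.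

Lemma dot_eq0 n (u : 'rV[R]_n) : dot u u = 0 -> u = 0.
Proof. move=> H; apply/rowP => i; rewrite mxE; have := coord_le u i; rewrite H.
  have := Rle_0_sqr (u 0 i); rewrite /Rsqr; toR; nra. Qed.

Lemma dot_gt0 n (u : 'rV[R]_n) : u != 0 -> Rlt 0 (dot u u).
Proof. move=> H; have := dot_ge0 u; case/Rle_lt_or_eq_dec => // E.
  by move: H; rewrite (dot_eq0 (esym E)) eqxx. Qed.

Local Open Scope ring_scope.

Local Open Scope ring_scope.

Lemma abs_prod_le (a b D : R) : Rle (a * a) D -> Rle (b * b) D -> Rle (Rabs (a * b)) D.
Proof. toR => Ha Hb; case: (Rle_lt_dec 0 (a * b)) => H.
  rewrite Rabs_pos_eq //; nra. rewrite Rabs_left //; nra. Qed.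

Definition absum n (A : 'M[R]_n) : R := \sum_j \sum_i Rabs (A i j).

Lemma absum_ge0 n (A : 'M[R]_n) : Rle 0 (absum A).
Proof. apply: sum_ge0 => j _; apply: sum_ge0 => i _; exact: Rabs_pos. Qed.

Lemma qbound n (A : 'M[R]_n) (y : 'rV[R]_n) :
  Rle (Rabs (dot (y *m A) y)) (absum A * dot y y).
Proof.
rewrite dotE /absum -RmulE mulr_suml.
apply: Rle_trans (sum_abs _ _ _) _; apply: sum_le => j _.
rewrite mxE mulr_suml mulr_suml.
apply: Rle_trans (sum_abs _ _ _) _; apply: sum_le => i _.
rewrite -mulrA (mulrC (A i j)) mulrA RmulE Rabs_mult.
have := Rabs_pos (A i j); have := abs_prod_le (coord_le y i) (coord_le y j).
move=> H1 H2; rewrite Rmult_comm; exact: Rmult_le_compat_l H2 H1.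
Qed.

Lemma CS n (a b : 'rV[R]_n) : Rle (dot a b * dot a b) (dot a a * dot b b).
Proof.
have [E|Hn] := eqVneq a 0.
  by rewrite E !dot0l; toR; lra.
have Hp := dot_gt0 Hn.
have := dot_ge0 (dot a a *: b - dot a b *: a).
rewrite !dotBl !dotBr !dotZl !dotZr (dotC b a).
have := dot_ge0 b. toR. move: (dot a a) (dot a b) (dot b b) Hp => A c B Hp HB H.
nra.
Qed.

Lemma mbound n (A : 'M[R]_n) (w : 'rV[R]_n) :
  Rle (dot (w *m A) (w *m A)) (dot w w * \sum_j \sum_i (A i j * A i j)).
Proof.
rewrite [in X in Rle X _]dotE -[Rmult (dot w w) _]RmulE mulr_sumr; apply: sum_le => j _.
have -> : (w *m A) 0 j = dot w (\row_i A i j).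
  by rewrite dotE mxE; apply: eq_bigr => i _; rewrite mxE.
have -> : \sum_i A i j * A i j = dot (\row_i A i j) (\row_i A i j).
  by rewrite dotE; apply: eq_bigr => i _; rewrite !mxE.
exact: CS.
Qed.

Local Open Scope ring_scope.

Local Open Scope ring_scope.

Lemma subU m n (A B : 'rV[R]_n) (C : 'M[R]_(m, n)) :
  (A <= C)%MS -> (B <= C)%MS -> (A - B <= C)%MS.
Proof. move=> HA HB; apply: addmx_sub => //; rewrite -scaleN1r; exact: scalemx_sub. Qed.

Lemma stabU m n (X : 'M[R]_n) (U : 'M[R]_(m, n)) (y : 'rV[R]_n) :
  (U *m X <= U)%MS -> (y <= U)%MS -> (y *m X <= U)%MS.
Proof. move=> sU yU; apply: submx_trans sU; exact: submxMr. Qed.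

Local Open Scope R_scope.
Lemma key_ineq (a b c C t : R) :
  Rlt 0 C -> Rle 0 b -> Rle c (C * b) -> Rmult t C = Ropp R1 ->
  Rle 0 (a + 2 * t * b + t * t * c) -> Rle b (C * a).
Proof. move=> HC Hb Hc Ht H.
have Ht2 : t * t * c <= - t * b.
  have : t * t * c <= t * t * (C * b) by apply: Rmult_le_compat_l; nra.
  have -> : t * t * (C * b) = - t * b * (- (t * C)) by ring.
  rewrite Ht; lra.
have : 0 <= a + t * b by lra.
move=> H2; have : 0 <= C * (a + t * b) by apply: Rmult_le_pos; lra.
have -> : C * (a + t * b) = C * a + (t * C) * b by ring.
rewrite Ht; lra.
Qed.

Local Open Scope ring_scope.
Lemma eigen_exists n (X U : 'M[R]_n) : X^T = X -> (U *m X <= U)%MS -> U != 0 ->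
  exists e : 'rV_n, [/\ (e <= U)%MS, e != 0 & exists s, e *m X = s *: e].
Proof.
move=> sX sU /rowV0Pn [y0 y0U y0n].
set Q := fun y : 'rV[R]_n => dot (y *m X) y.
set L := absum X.
have HL := absum_ge0 X.
have QL : forall y, Rle (Rabs (Q y)) (L * dot y y) by move=> y; exact: qbound.
pose E := fun x : R => exists y : 'rV[R]_n, [/\ (y <= U)%MS, y != 0 & x = Rdiv (Q y) (dot y y)].
have Eb : bound E.
  exists L => x [y [_ yn ->]]. have Dp := dot_gt0 yn.
  apply: (Rmult_le_reg_r (dot y y)) => //. rewrite /Rdiv Rmult_assoc Rinv_l; last lra.
  have := QL y; have := Rle_abs (Q y); lra.
have Ene : exists x, E x by exists (Rdiv (Q y0) (dot y0 y0)); exists y0.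
have [S [Sup Sleast]] := completeness E Eb Ene.
have Hup : forall y, (y <= U)%MS -> Rle (Q y) (S * dot y y).
  move=> y yU; have [->|yn] := eqVneq y 0.
    by rewrite /Q mul0mx !dot0l; toR; lra.
  have Dp := dot_gt0 yn; have := Sup _ (ex_intro _ y (And3 yU yn erefl)).
  move=> H; have := Rmult_le_compat_r (dot y y) _ _ (Rlt_le _ _ Dp) H.
  by rewrite /Rdiv Rmult_assoc Rinv_l; lra.
have Hleast : forall T, (forall y, (y <= U)%MS -> y != 0 -> Rle (Q y) (T * dot y y)) -> Rle S T.
  move=> T HT; apply: Sleast => x [y [yU yn ->]]. have Dp := dot_gt0 yn.
  apply: (Rmult_le_reg_r (dot y y)) => //. rewrite /Rdiv Rmult_assoc Rinv_l; last lra.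
  rewrite Rmult_1_r; exact: HT.
set f := fun y : 'rV[R]_n => S *: y - y *m X.
have fU : forall y, (y <= U)%MS -> (f y <= U)%MS.
  by move=> y yU; apply: subU; [exact: scalemx_sub | exact: stabU].
have fsym : forall y w, dot (f y) w = dot y (f w).
  by move=> y w; rewrite /f dotBl dotBr dotZl dotZr dotX.
have fD : forall y w a, f (y + a *: w) = f y + a *: f w.
  move=> y w a; rewrite /f mulmxDl scalerDr -scalemxAl scalerA mulrC -scalerA.
  by rewrite scalerBr opprD !addrA; congr (_ - _); rewrite -!addrA; congr (_ + _); rewrite addrC.
set P := fun y => dot (f y) y.
have PQ : forall y, P y = S * dot y y - Q y.
  by move=> y; rewrite /P /f dotBl dotZl.
have Pge : forall y, (y <= U)%MS -> Rle 0 (P y).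
  move=> y yU; rewrite PQ; have := Hup y yU; toR; intros; nra.
set C := Rabs S + L + 1.
have Cp : Rlt 0 C by have := Rabs_pos S; rewrite /C /L; toR; intros; lra.
have Key : forall y, (y <= U)%MS -> Rle (dot (f y) (f y)) (C * P y).
  move=> y yU; set z := f y.
  have zU : (z <= U)%MS by exact: fU.
  set t := Ropp (Rinv C).
  have Ht : Rmult t C = Ropp R1 by rewrite /t; field; lra.
  have H0 := Pge _ (addmx_sub yU (scalemx_sub t zU)).
  rewrite /P fD dotDl !dotDr !dotZl !dotZr fsym in H0.
  rewrite -/(P y) -/z in H0.
  have Hc : Rle (P z) (C * dot z z).
    rewrite PQ; have := QL z; have := Rabs_pos S; have := dot_ge0 z.
    have := Rle_abs (- Q z); rewrite Rabs_Ropp.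
    have := Rle_abs S. move: (dot z z) (Q z) => b q. rewrite /C; toR; nra.
  apply: (key_ineq (c := P z) (t := t)) => //. exact: dot_ge0.
  have -> : P z = dot (f z) z by [].
  move: H0; rewrite [dot (f z) y]fsym /P -/z (dotC z y). toR; intros; nra.
have fF : forall y, f y = y *m (S%:M - X).
  by move=> y; rewrite /f mulmxBr mul_mx_scalar.
have [y [yU yn fy0]] : exists y, [/\ (y <= U)%MS, y != 0 & f y = 0].
  case: (classic (exists y, [/\ (y <= U)%MS, y != 0 & f y = 0])) => // Hno.
  exfalso.
  have inj : forall y, (y <= U)%MS -> f y = 0 -> y = 0.
    move=> y yU fy; case: (eqVneq y 0) => // yn; exfalso; apply: Hno; by exists y; split.
  set B := row_base U.
  have BU : forall u : 'rV_(\rank U), (u *m B <= U)%MS.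
    by move=> u; rewrite -(eq_row_base U) submxMl.
  have rf : row_free (B *m (S%:M - X)).
    rewrite -kermx_eq0; apply/rowV0P => u /sub_kermxP uBF.
    have : u *m B = 0 by apply: inj; [exact: BU | rewrite fF -mulmxA].
    by move/eqP; rewrite mulmx_free_eq0 ?row_base_free // => /eqP.
  have [N HN] := row_freeP rf.
  set P' := N *m B.
  have yrep : forall y, (y <= U)%MS -> y = f y *m P'.
    move=> y; rewrite -(eq_row_base U) => /submxP [a ->].
    by rewrite fF /P' [in RHS]mulmxA -(mulmxA a B) -(mulmxA a) HN mulmx1.
  set K0 := \sum_j \sum_i (P' i j * P' i j).
  have K0ge : Rle 0 K0.
    by apply: sum_ge0 => j _; apply: sum_ge0 => i _; toR; nra.
  set K := Rplus (Rmult C K0) 1.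
  have Kp : Rlt 0 K by rewrite /K; have := Rmult_le_pos _ _ (Rlt_le _ _ Cp) K0ge; lra.
  have HQ : forall y, (y <= U)%MS -> y != 0 -> Rle (Q y) (Rminus S (Rinv K) * dot y y).
    move=> y yU yn.
    have H1 : Rle (dot y y) (dot (f y) (f y) * K0).
      by rewrite {1 2}(yrep y yU); exact: mbound.
    have H2 := Key y yU.
    have H3 := Pge y yU.
    have H4 := dot_ge0 (f y).
    have H5 : Rle (dot y y) (K * P y).
      rewrite /K; have : Rle (dot (f y) (f y) * K0) (C * P y * K0).
        by apply: Rmult_le_compat_r.
      move=> H6; have : Rle 0 (P y) by [].
      move: (dot y y) (dot (f y) (f y)) (P y) H1 H6 H3 K0ge Cp => a b c; nra.
    rewrite PQ in H5.
    have : Rle (dot y y * Rinv K) (S * dot y y - Q y).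
      apply: (Rmult_le_reg_l K) => //. rewrite -Rmult_assoc (Rmult_comm K) Rmult_assoc Rinv_r; last lra.
      move: H5; toR; lra.
    move: (dot y y) (Q y) => d q; toR; nra.
  have := Hleast _ HQ.
  have := Rinv_0_lt_compat _ Kp. lra.
exists y; split => //; exists S; apply/eqP; rewrite eq_sym -subr_eq0.
by apply/eqP; rewrite -fy0.
Qed.

Local Open Scope ring_scope.

Local Open Scope ring_scope.

Fixpoint good n (X : 'M[R]_n) (s : seq (R * R * 'rV[R]_n)) : Prop :=
  match s with
  | [::] => True
  | t :: s' => [/\ t.2 *m X = t.1.1 *: t.2, t.2 != 0,
                  List.Forall (fun t' => dot t.2 t'.2 = 0) s' & good X s']
  end.

Lemma dot0P n (w e : 'rV[R]_n) : (w *m e^T == 0) = (dot w e == 0).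
Proof.
apply/eqP/eqP => [H|H]; first by rewrite /dot H mxE.
by apply/rowP => i; rewrite (ord1 i) [RHS]mxE -H /dot mxE.
Qed.

Lemma spec n (X : 'M[R]_n) : X^T = X -> forall U : 'M[R]_n, (U *m X <= U)%MS ->
  forall v : 'rV_n, (v <= U)%MS ->
  exists s, [/\ good X s, List.Forall (fun t => (t.2 <= U)%MS) s &
             v = \sum_(t <- s) t.1.2 *: t.2].
Proof.
move=> sX U; have [k] := ubnP (\rank U); elim: k U => // k IH U rk sU v vU.
have [U0|Un0] := eqVneq U 0.
  exists [::]; split => //; rewrite big_nil; apply/eqP; move: vU.
  by rewrite U0 submx0.
have [e [eU en [lam eX]]] := eigen_exists sX sU Un0.
set U' := (U :&: kermx e^T)%MS.
have sub' : forall w, (w <= U')%MS = (w <= U)%MS && (dot w e == 0).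
  by move=> w; rewrite sub_capmx sub_kermx dot0P.
have sU' : (U' *m X <= U')%MS.
  apply/row_subP => i; rewrite row_mul sub'.
  have := row_sub i U'; rewrite sub' => /andP [wU /eqP we].
  rewrite (stabU sU wU) /= -dotX // eX dotZr we mulr0 //.
have ep := dot_gt0 en.
have rk' : (\rank U' < k)%N.
  have lt : (U' < U)%MS.
    rewrite ltmxE capmxSl /=.
    apply/negP => H; have := submx_trans eU H; rewrite sub' => /andP [_ /eqP E].
    by move: ep; rewrite E; toR; lra.
  by apply: leq_trans (rank_ltmx lt) _; rewrite -ltnS.
set a := dot v e * (dot e e)^-1.
set v' := v - a *: e.
have v'U' : (v' <= U')%MS.
  rewrite sub' (subU vU (scalemx_sub _ eU)) /= /v' dotBl dotZl /a mulfVK //.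
    by rewrite subrr.
  by apply/eqP => E; move: ep; rewrite E; toR; lra.
have [s' [g' F' E']] := IH U' rk' sU' v' v'U'.
exists (((lam, a), e) :: s'); split => /=.
- split => //.
  apply: Forall_impl F' => t /=; rewrite sub' => /andP [_ /eqP]; rewrite dotC //.
- constructor => //; apply: Forall_impl F' => t H; exact: submx_trans H (capmxSl _ _).
- by rewrite big_cons -E' /v' addrC subrK.
Qed.

Local Open Scope ring_scope.

Local Open Scope ring_scope.

Lemma rsumE n (f : 'I_n -> R) : rsum f = \sum_i f i. Proof. by []. Qed.

Lemma mapply_mmul n (A B : mat n) w : mapply (mmul A B) w = mapply A (mapply B w).
Proof.
apply: functional_extensionality => i; rewrite /mapply /mmul !rsumE.
under eq_bigr do rewrite rsumE -RmulE mulr_suml.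
rewrite exchange_big /=; apply: eq_bigr => l _.
by rewrite -RmulE rsumE mulr_sumr; apply: eq_bigr => k _; rewrite !RmulE; ring.
Qed.

Lemma mapply_scale n (A : mat n) c w : mapply A (vscale c w) = vscale c (mapply A w).
Proof.
apply: functional_extensionality => i; rewrite /mapply /vscale !rsumE.
rewrite -RmulE mulr_sumr; apply: eq_bigr => k _; rewrite !RmulE; ring.
Qed.

Lemma mapply_id n w : mapply (mid n) w = w.
Proof.
apply: functional_extensionality => i; rewrite /mapply /mid rsumE (bigD1 i) //= eqxx.
rewrite big1 ?addr0; first by ring.
by move=> j; rewrite eq_sym => /negbTE ->; exact: Rmult_0_l.
Qed.

Lemma mpow_eig n (A : mat n) w r k :
  mapply A w = vscale r w -> mapply (mpow A k) w = vscale (pow r k) w.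
Proof.
move=> H; elim: k => [|k IH] /=.
  rewrite mapply_id; apply: functional_extensionality => i; by rewrite /vscale; ring.
rewrite mapply_mmul IH mapply_scale H; apply: functional_extensionality => i.
by rewrite /vscale; ring.
Qed.

Lemma cv_const (c : R) : Un_cv (fun _ => c) c.
Proof. move=> eps Heps; exists 0%N => m _; rewrite /Rdist Rminus_diag Rabs_R0 //. Qed.

Lemma cv_bigsum (I : Type) (r : seq I) (f : nat -> I -> R) (l : I -> R) :
  (forall j, Un_cv (fun N => f N j) (l j)) ->
  Un_cv (fun N => \sum_(j <- r) f N j) (\sum_(j <- r) l j).
Proof.
move=> H; elim: r => [|j r IH].
  rewrite big_nil; under [fun N => _]functional_extensionality do rewrite big_nil.
  exact: cv_const.
rewrite big_cons; under [fun N => _]functional_extensionality do rewrite big_cons.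
exact: CV_plus.
Qed.

Lemma sumf_big n (g : nat -> 'I_n -> R) N :
  sum_f_R0 (fun k => \sum_j g k j) N = \sum_j sum_f_R0 (fun k => g k j) N.
Proof.
elim: N => [|N IH] /=; first by [].
by rewrite IH -RaddE -big_split.
Qed.

Lemma bigRmull (I : Type) (r : seq I) (P : pred I) (c : R) (F : I -> R) :
  \sum_(i <- r | P i) Rmult c (F i) = Rmult c (\sum_(i <- r | P i) F i).
Proof. symmetry; exact: mulr_sumr. Qed.

Local Open Scope R_scope.
Lemma expact n (A E : mat n) w r :
  is_mexp A E -> mapply A w = vscale r w -> mapply E w = vscale (exp r) w.
Proof.
move=> HE Hw; apply: functional_extensionality => i.
rewrite /mapply rsumE /vscale.
set T := fun N => \sum_j (sum_f_R0 (fun k => mpow A k i j / INR (Factorial.fact k)) N * w j).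
have H1 : Un_cv T (\sum_j E i j * w j).
  apply: cv_bigsum => j; apply: CV_mult; [exact: HE | exact: cv_const].
have H2 : Un_cv T (exp r * w i).
  have -> : T = (fun N => sum_f_R0 (fun k => / INR (Factorial.fact k) * pow r k) N * w i).
    apply: functional_extensionality => N; rewrite /T.
    under eq_bigr do rewrite ?RmulE ?RinvE.
    rewrite (eq_bigr (fun j => sum_f_R0 (fun k => mpow A k i j / INR (Factorial.fact k) * w j) N)); last first.
      by move=> j _; rewrite Rmult_comm scal_sum.
    rewrite -sumf_big Rmult_comm scal_sum; apply PartSum.sum_eq => k _.
    have Hk := f_equal (fun f => f i) (mpow_eig k Hw); rewrite /mapply /vscale rsumE /= in Hk.
    rewrite (eq_bigr (fun j => Rmult (/ INR (Factorial.fact k)) (mpow A k i j * w j))).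
      by rewrite bigRmull Hk; ring.
    by move=> j _; rewrite /Rdiv; ring.
  apply: CV_mult; last exact: cv_const.
  rewrite /exp; case: (exist_exp r) => l Hl /=; exact: Hl.
exact: UL_sequence H1 H2.
Qed.

Local Open Scope ring_scope.

Local Open Scope ring_scope.

Notation trip n := (R * R * 'rV[R]_n)%type.

Lemma good_eig n (X : 'M[R]_n) s : good X s ->
  List.Forall (fun t : trip n => t.2 *m X = t.1.1 *: t.2 /\ t.2 != 0) s.
Proof. elim: s => [|t s IH] //= [H1 H2 _ H4]; constructor => //; exact: IH. Qed.

Lemma dot_orth_sum n (e : 'rV[R]_n) (s : seq (trip n)) (b : trip n -> R) :
  List.Forall (fun t' : trip n => dot e t'.2 = 0) s ->
  dot e (\sum_(t <- s) b t *: t.2) = 0.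
Proof.
elim: s => [|t s IH] H; first by rewrite big_nil dot0r.
inversion H; subst; rewrite big_cons dotDr dotZr H2 mulr0 add0r; exact: IH.
Qed.

Lemma ortho_sum n (X : 'M[R]_n) s (a b : trip n -> R) : good X s ->
  dot (\sum_(t <- s) a t *: t.2) (\sum_(t <- s) b t *: t.2) =
  \sum_(t <- s) a t * b t * dot t.2 t.2.
Proof.
elim: s => [|t s IH] /=; first by rewrite !big_nil dot0l.
move=> [_ _ Ho g]; rewrite !big_cons dotDl !dotDr !dotZl !dotZr IH //.
rewrite dot_orth_sum // (dotC _ t.2) dot_orth_sum // !mulr0 addr0 add0r mulrA; congr (_ + _); apply: eq_bigr => j _; rewrite ?RmulE.
Qed.

Lemma sum_mulX n (X : 'M[R]_n) s (f : trip n -> R) : good X s ->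
  (\sum_(t <- s) f t *: t.2) *m X = \sum_(t <- s) (f t * t.1.1) *: t.2.
Proof.
elim: s => [|t s IH] /=; first by rewrite !big_nil mul0mx.
move=> [H1 _ _ g]; rewrite !big_cons mulmxDl IH // -scalemxAl H1 scalerA //.
Qed.

Lemma comp_in n (X : 'M[R]_n) s (w : 'rV_n) m : X^T = X -> good X s ->
  w *m X = m *: w -> dot (\sum_(t <- s) t.1.2 *: t.2) w != 0 ->
  List.Exists (fun t : trip n => t.1.2 != 0 /\ t.1.1 = m) s.
Proof.
move=> sX; elim: s => [|t s IH] /=; first by rewrite big_nil dot0l eqxx.
move=> [H1 H2 _ g] Hw; rewrite big_cons dotDl dotZl.
have [Hz|Hnz] := eqVneq (t.1.2 * dot t.2 w) 0.
  by rewrite Hz add0r => H; apply: Exists_cons_tl; exact: IH.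
move=> _; apply: Exists_cons_hd; move: Hnz; rewrite mulf_eq0 negb_or => /andP [Hc Hd].
split => //.
have : t.1.1 * dot t.2 w = m * dot t.2 w.
  by rewrite -dotZl -H1 -dotX // Hw dotZr.
by move/(mulIf Hd).
Qed.

Lemma sum_pos_exists (T : Type) (s : seq T) (F : T -> R) :
  (forall t, Rle 0 (F t)) -> List.Exists (fun t => Rlt 0 (F t)) s ->
  Rlt 0 (\sum_(t <- s) F t).
Proof.
move=> H; elim: s => [|t s IH] HE; first by inversion HE.
rewrite big_cons; inversion HE; subst.
  exact: (Rplus_lt_le_0_compat _ _ H1 (@sum_ge0 T s predT F (fun t _ => H t))).
exact: (Rplus_le_lt_0_compat _ _ (H t) (IH H1)).
Qed.

Lemma Exists_Forall_and (T : Type) (P Q : T -> Prop) s :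
  List.Forall Q s -> List.Exists P s -> List.Exists (fun t => P t /\ Q t) s.
Proof.
elim: s => [|t s IH] HF HE; first by inversion HE.
inversion HF; subst; inversion HE; subst.
  by apply: Exists_cons_hd.
by apply: Exists_cons_tl; exact: IH.
Qed.

Lemma comp_out n (X : 'M[R]_n) s m : good X s ->
  List.Exists (fun t : trip n => t.1.2 != 0 /\ t.1.1 = m) s ->
  exists w, w *m X = m *: w /\ dot (\sum_(t <- s) t.1.2 *: t.2) w != 0.
Proof.
move=> g HE.
exists (\sum_(t <- s) (if t.1.1 == m then t.1.2 else 0) *: t.2); split.
  rewrite sum_mulX // scaler_sumr; apply: eq_bigr => t _.
  rewrite scalerA; congr (_ *: _); case: eqP => [->|_]; [exact: mulrC | by rewrite mul0r mulr0].
rewrite (ortho_sum _ _ g); apply/eqP => E.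
have : Rlt 0 (\sum_(t <- s) t.1.2 * (if t.1.1 == m then t.1.2 else 0) * dot t.2 t.2).
  apply: sum_pos_exists.
    move=> t; case: eqP => _; last by rewrite mulr0 mul0r; toR; lra.
    have := dot_ge0 t.2; move: (dot t.2 t.2) => d; toR; nra.
  have := Exists_Forall_and (good_eig g) HE.
  apply: Exists_impl => t [[Hc Hl] [_ He]]; rewrite Hl eqxx.
  have := dot_gt0 He; move: Hc; move: (dot t.2 t.2) (t.1.2) => d c /eqP Hc.
  toR => Hd; have : Rlt 0 (c * c) by apply: Rsqr_pos_lt.
  move=> Hcc; have := Rmult_lt_0_compat _ _ Hcc Hd; by [].
by rewrite E; toR; lra.
Qed.

Lemma nonzero_c n (s : seq (trip n)) :
  \sum_(t <- s) t.1.2 *: t.2 != 0 -> List.Exists (fun t : trip n => t.1.2 != 0) s.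
Proof.
elim: s => [|t s IH]; first by rewrite big_nil eqxx.
rewrite big_cons; have [Hc|Hc] := eqVneq t.1.2 0.
  by rewrite Hc scale0r add0r => H; apply: Exists_cons_tl; exact: IH.
by move=> _; apply: Exists_cons_hd.
Qed.

Lemma max_exists (T : Type) (P : pred T) (f : T -> R) s :
  List.Exists P s -> exists t, [/\ List.In t s, P t &
    forall t', List.In t' s -> P t' -> Rle (f t') (f t)].
Proof.
elim: s => [|t s IH] HE; first by inversion HE.
case: (classic (List.Exists P s)) => H.
  have [t1 [In1 P1 M1]] := IH H.
  case: (boolP (P t)) => Pt.
    case: (Rle_lt_dec (f t) (f t1)) => Hle.
      exists t1; split => //; [by right | move=> t' [<-|Ht'] //; exact: M1].
    exists t; split => //; [by left | move=> t' [<-|Ht'] Pt'; [exact: Rle_refl | ]].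
    by have := M1 t' Ht' Pt'; lra.
  exists t1; split => //; [by right | move=> t' [<-|Ht'] Pt'; [by rewrite Pt' in Pt | exact: M1]].
inversion HE; subst; last by [].
exists t; split => //; [by left | move=> t' [<-|Ht'] Pt'; [exact: Rle_refl | ]].
by exfalso; apply: H; apply/Exists_exists; exists t'.
Qed.

Lemma aux_le (a b c d : R) : Rle b a -> Rle d c -> Rle (Rplus a c) (Rplus b d) -> a = b /\ Rle c d.
Proof. move=> *; split; lra. Qed.

Lemma sum_le_Forall (T : Type) (s : seq T) (F G : T -> R) :
  List.Forall (fun t => Rle (G t) (F t)) s -> Rle (\sum_(t <- s) G t) (\sum_(t <- s) F t).
Proof.
elim: s => [|t s IH] HF; first by rewrite !big_nil; apply: Rle_refl.
inversion HF; subst; rewrite !big_cons; exact: Rplus_le_compat H1 (IH H2).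
Qed.

Lemma termwise (T : Type) (s : seq T) (F G : T -> R) :
  List.Forall (fun t => Rle (G t) (F t)) s -> Rle (\sum_(t <- s) F t) (\sum_(t <- s) G t) ->
  forall t, List.In t s -> F t = G t.
Proof.
elim: s => [|t s IH] //; rewrite !big_cons => HF Hs t' Ht'.
inversion HF; subst.
have HS := sum_le_Forall H2.
have [E1 E2] := aux_le H1 HS Hs.
case: Ht' => [<-|Ht'] //; exact: IH.
Qed.

Local Open Scope ring_scope.

Local Open Scope ring_scope.

Definition vec_of n (u : 'rV[R]_n) : vec n := fun i => u 0 i.
Definition mx_of n (X : mat n) : 'M[R]_n := \matrix_(i, j) X i j.
Definition rv_of n (w : vec n) : 'rV[R]_n := \row_i w i.

Lemma vec_rv n (w : vec n) : vec_of (rv_of w) = w.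
Proof. by apply: functional_extensionality => i; rewrite /vec_of mxE. Qed.

Lemma vec_of_inj n (u w : 'rV[R]_n) : vec_of u = vec_of w -> u = w.
Proof. move=> H; apply/rowP => i; exact: (f_equal (fun f => f i) H). Qed.

Lemma vdot_conv n (u w : 'rV[R]_n) : vdot (vec_of u) (vec_of w) = dot u w.
Proof. by rewrite /vdot rsumE dotE. Qed.

Lemma vnorm_conv n (u : 'rV[R]_n) : vnorm (vec_of u) = sqrt (dot u u).
Proof. by rewrite /vnorm vdot_conv. Qed.

Lemma mapply_conv n (X : mat n) (u : 'rV[R]_n) : (forall i j, X i j = X j i) ->
  mapply X (vec_of u) = vec_of (u *m mx_of X).
Proof.
move=> HX; apply: functional_extensionality => i; rewrite /mapply /vec_of rsumE mxE.
apply: eq_bigr => k _; rewrite mxE HX RmulE; exact: Rmult_comm.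
Qed.

Lemma mapply_convT n (E : mat n) (u : 'rV[R]_n) :
  mapply E (vec_of u) = vec_of (u *m (mx_of E)^T).
Proof.
apply: functional_extensionality => i; rewrite /mapply /vec_of rsumE mxE.
apply: eq_bigr => k _; rewrite !mxE RmulE; exact: Rmult_comm.
Qed.

Lemma vscale_conv n c (u : 'rV[R]_n) : vscale c (vec_of u) = vec_of (c *: u).
Proof. by apply: functional_extensionality => i; rewrite /vscale /vec_of mxE. Qed.

Lemma mapply_mscale n c (A : mat n) w : mapply (mscale c A) w = vscale c (mapply A w).
Proof.
apply: functional_extensionality => i; rewrite /mapply /vscale /mscale !rsumE.
rewrite -bigRmull; apply: eq_bigr => k _; ring.
Qed.

Lemma sum_mulF n (M : 'M[R]_n) (s : seq (trip n)) (g f : trip n -> R) :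
  List.Forall (fun t : trip n => t.2 *m M = f t *: t.2) s ->
  (\sum_(t <- s) g t *: t.2) *m M = \sum_(t <- s) (g t * f t) *: t.2.
Proof.
elim: s => [|t s IH] HF; first by rewrite !big_nil mul0mx.
inversion HF; subst; rewrite !big_cons mulmxDl IH // -scalemxAl H1 scalerA //.
Qed.

Lemma sum_zero n (s : seq (trip n)) (g : trip n -> R) :
  List.Forall (fun t : trip n => g t = 0) s -> \sum_(t <- s) g t *: t.2 = 0.
Proof.
elim: s => [|t s IH] HF; first by rewrite big_nil.
inversion HF; subst; rewrite big_cons H1 scale0r add0r; exact: IH.
Qed.

Lemma zero_lie n (G : mat n -> Prop) : subgroup_GL G -> lie_alg G (fun _ _ => 0%R).
Proof.
move=> [_ [HI _]] t; exists (mid n); split => // i j.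
have -> : (fun N => sum_f_R0 (fun k => (mpow (mscale t (fun _ _ => 0%R)) k i j / INR (Factorial.fact k))%R) N)
          = (fun _ => mid n i j).
  apply: functional_extensionality => N; elim: N => [|N IH] /=.
    exact: (Rdiv_1_r (mid n i j)).
  rewrite IH /mmul rsumE big1; first by rewrite mul0r; exact: Rplus_0_r.
  by move=> k _; rewrite /mscale Rmult_0_r Rmult_0_l.
exact: cv_const.
Qed.

Local Open Scope ring_scope.

Local Open Scope ring_scope.

Lemma eig_iff n (X : mat n) (v : vec n) m : (forall i j, X i j = X j i) ->
  eigen_comp X v m <-> exists w : 'rV_n, w *m mx_of X = m *: w /\ dot (rv_of v) w != 0.
Proof.
move=> HX; split.
  move=> [w [Hw Hd]]; exists (rv_of w); split.
    apply: vec_of_inj; rewrite -mapply_conv // vec_rv Hw -vscale_conv vec_rv //.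
  by apply/eqP; rewrite -vdot_conv !vec_rv.
move=> [w [Hw /eqP Hd]]; exists (vec_of w); split.
  by rewrite mapply_conv // Hw vscale_conv.
by rewrite -(vec_rv v) vdot_conv.
Qed.

Lemma mdotE n (X : mat n) : mdot X X = \sum_j \sum_i (mx_of X i j * mx_of X i j).
Proof.
rewrite /mdot /mtrace /mmul /mtr rsumE exchange_big /=; apply: eq_bigr => j _.
apply: eq_bigr => i _; by rewrite !mxE.
Qed.

Lemma exp_le1 (x : R) : Rle x 0 -> Rle (exp x) 1 /\ (Rlt x 0 -> Rlt (exp x) 1).
Proof.
move=> H; rewrite -exp_0; split.
  case: (Rle_lt_or_eq_dec _ _ H) => [Hl|->]; [apply: Rlt_le; exact: exp_increasing | exact: Rle_refl].
exact: exp_increasing.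
Qed.

Lemma main_lemma (n : nat) (G : mat n -> Prop) (v : vec n) :
  subgroup_GL G -> v <> vzero n -> minimal G v ->
  forall X : mat n, Ptilde G v X -> mnorm X = R1 ->
  exists l : R, is_lambda X v l /\ Rlt 0 l /\ Rle l 1.
Proof.
move=> HG Hv0 Hmin X [[HlieX HsymX] Horth] HnX.
have HX : forall i j, X i j = X j i.
  by move=> i j; rewrite -[in LHS]HsymX.
set Xm := mx_of X.
have sX : Xm^T = Xm by apply/matrixP => i j; rewrite !mxE HX.
set vm := rv_of v.
have vm0 : vm != 0.
  apply/eqP => E; apply: Hv0; rewrite -(vec_rv v) -/vm E.
  by apply: functional_extensionality => i; rewrite /vec_of mxE.
have [s [g _ Ev]] := spec sX (submx1 _) (submx1 vm).
have Ex : List.Exists (fun t : trip n => t.1.2 != 0) s by apply: nonzero_c; rewrite -Ev.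
have [t0 [In0 P0 M0]] := max_exists (fun t : trip n => t.1.1) Ex.
have E0 := good_eig g.
have [e0X e0n] := proj1 (Forall_forall _ _) E0 t0 In0.
have Hm : mdot X X = R1.
  have H0 : Rle 0 (mdot X X).
    by rewrite mdotE; apply: sum_ge0 => j _; apply: sum_ge0 => i _; toR; nra.
  by have := sqrt_sqrt _ H0; rewrite -/(mnorm X) HnX; lra.
exists t0.1.1; split; [split|split].
- apply/(eig_iff _ _ HX); rewrite -/vm Ev; apply: comp_out g _.
  by apply/Exists_exists; exists t0.
- move=> m /(eig_iff _ _ HX) [w [Hw Hd]]; rewrite -/vm Ev in Hd.
  have := comp_in sX g Hw Hd; move/Exists_exists => [t [Int [Hc Hl]]].
  rewrite -Hl; exact: M0.
- apply: Rnot_le_lt => Hle.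
  have [E [HE GE]] := HlieX 1.
  set Em := (mx_of E)^T.
  have EF : List.Forall (fun t : trip n => t.2 *m Em = exp (t.1.1) *: t.2) s.
    apply/Forall_forall => t Int; have [tX tn] := proj1 (Forall_forall _ _) E0 t Int.
    apply: vec_of_inj; rewrite -mapply_convT -vscale_conv; apply: (expact HE).
    rewrite mapply_mscale mapply_conv // tX -vscale_conv.
    apply: functional_extensionality => i; rewrite /vscale; exact: Rmult_1_l.
  have Hmin' := Hmin E GE.
  rewrite -(vec_rv v) -/vm mapply_convT !vnorm_conv -/Em Ev (sum_mulF _ EF) in Hmin'.
  rewrite !(ortho_sum _ _ g) in Hmin'.
  have S1 : Rle 0 (\sum_(t <- s) t.1.2 * t.1.2 * dot t.2 t.2).
    apply: sum_ge0 => t _; have := dot_ge0 t.2; move: (dot t.2 t.2) (t.1.2) => d c Hd; exact: (Rmult_le_pos _ _ (Rle_0_sqr c) Hd).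
  have S2 : Rle 0 (\sum_(t <- s) t.1.2 * exp t.1.1 * (t.1.2 * exp t.1.1) * dot t.2 t.2).
    apply: sum_ge0 => t _; have := dot_ge0 t.2; move: (dot t.2 t.2) (t.1.2) (exp t.1.1) => d c x Hd; exact: (Rmult_le_pos _ _ (Rle_0_sqr (c * x)) Hd).
  have Hs := sqrt_le_0 _ _ S1 S2 Hmin'.
  have HF : List.Forall (fun t : trip n => Rle (t.1.2 * exp t.1.1 * (t.1.2 * exp t.1.1) * dot t.2 t.2)
                                          (t.1.2 * t.1.2 * dot t.2 t.2)) s.
    apply/Forall_forall => t Int.
    have [Hc|Hc] := eqVneq t.1.2 0.
      by rewrite Hc R0E !Rmult_0_l; apply: Rle_refl.
    have Hl : Rle t.1.1 0 by have := M0 t Int Hc; lra.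
    have [ex1 _] := exp_le1 Hl; move: ex1; have := exp_pos t.1.1; have := dot_ge0 t.2.
    move: (dot t.2 t.2) (t.1.2) (exp t.1.1) => d c x; toR => Hd Hx ex1.
    have h1 : Rle (x * x) 1 by nra.
    have h2 : Rle 0 (c * c * d) by exact: (Rmult_le_pos _ _ (Rle_0_sqr c) Hd).
    nra.
  have Hterm := termwise HF Hs.
  have HZ : List.Forall (fun t : trip n => t.1.2 * t.1.1 = 0) s.
    apply/Forall_forall => t Int.
    have [Hc|Hc] := eqVneq t.1.2 0; first by rewrite Hc mul0r.
    have Hl : Rle t.1.1 0 by have := M0 t Int Hc; lra.
    have [_ ex2] := exp_le1 Hl.
    have [_ tn] := proj1 (Forall_forall _ _) E0 t Int.
    have Hd := dot_gt0 tn.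
    have Ht := Hterm t Int.
    case: (Rle_lt_or_eq_dec _ _ Hl) => [Hlt|->]; last by rewrite mulr0.
    exfalso; have := ex2 Hlt; have := exp_pos t.1.1.
    move: Ht Hc Hd; move: (dot t.2 t.2) (t.1.2) (exp t.1.1) => d c x.
    move=> Ht /eqP Hc Hd Hx Hx1; toR.
    have Hcc : Rlt 0 (c * c) by apply: Rsqr_pos_lt.
    have : Rlt (x * x) 1 by nra.
    move=> Hxx; have Hcd : Rlt 0 (c * c * d) by nra.
    have := Rmult_lt_0_compat _ _ Hcd (Rlt_Rminus _ _ Hxx).
    move: Ht; toR; intros; nra.
  have vmX : vm *m Xm = 0 by rewrite Ev (sum_mulX _ g) (sum_zero HZ).
  have Hz : mapply X v = vzero n.
    rewrite -(vec_rv v) mapply_conv // -/vm vmX.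
    by apply: functional_extensionality => i; rewrite /vec_of mxE.
  have HK : frakK G (fun _ _ => 0%R).
    split; first exact: zero_lie.
    by apply: functional_extensionality => i; apply: functional_extensionality => j; rewrite /mtr /mopp Ropp_0.
  have := Horth _ X HK (conj HlieX Hz).
  have -> : madd (fun _ _ => 0%R) X = X.
    by apply: functional_extensionality => i; apply: functional_extensionality => j; rewrite /madd Rplus_0_l.
  rewrite Hm; lra.
- have Hd := dot_gt0 e0n.
  have Hb := mbound Xm t0.2.
  rewrite e0X dotZl dotZr -mdotE Hm in Hb.
  move: Hb Hd; move: (dot t0.2 t0.2) (t0.1.1) => d l; toR => Hb Hd.
  have h : Rle (l * l) 1.
    apply: (Rmult_le_reg_r d) => //; move: Hb; rewrite Rmult_1_l; intros; nra.
  nra.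
Qed.

Local Open Scope ring_scope.

Local Open Scope R_scope.

Theorem proposition7p6 (n : nat) (G : mat n -> Prop) (v : vec n) :
  subgroup_GL G -> closed_in_GL G -> mconnected G -> self_adjoint G ->
  ~ mcompact G ->
  v <> vzero n -> minimal G v -> orbit_unbounded G v ->
  forall X : mat n, Ptilde G v X -> mnorm X = 1 ->
  exists l : R, is_lambda X v l /\ 0 < l /\ l <= 1.
Proof.
move=> HG _ _ _ _ Hv0 Hmin _ X HX HnX.
exact: (main_lemma HG Hv0 Hmin HX HnX).
Qed.
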